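(* Let $m,n,w$ be positive integers with $w\le m$, and let $d=(n-1)w+r$ with $0<r\le w$. Then $A(m,n,w,d)\le B(m,w,r)$.
   Context: $J(m,w)$ denotes the set of binary vectors of length $m$ and Hamming weight $w$. Elements of $J(m,w)^n$ are identified with $m\times n$ binary matrices all of whose columns have weight $w$, with binary Hamming distance. $A(m,n,w,d)$ is the maximum cardinality of a nonempty subset of $J(m,w)^n$ with pairwise Hamming distances at least $2d$. $B(m,w,r)$ is the maximum cardinality of a nonempty subset of $J(m,w)$ with pairwise Hamming distances at least $2r$. *)

(* Defs.v *)
From mathcomp Require Import all_boot all_order all_algebra.
Set Implicit Arguments. Unset Strict Implicit. Unset Printing Implicit Defensive.

Definition hweight m (x : {ffun 'I_m -> bool}) : nat := #|[set i | x i]|.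
Definition hdist m (x y : {ffun 'I_m -> bool}) : nat := #|[set i | x i != y i]|.

Definition inJ m w (x : {ffun 'I_m -> bool}) : bool := hweight x == w.

(* Elements of J(m,w)^n are m x n binary matrices with all column weights w;
   distance is the binary Hamming distance on all m*n entries. *)
Definition colweight m n (M : 'M[bool]_(m, n)) (j : 'I_n) : nat :=
  #|[set i | M i j]|.
Definition inJn m n w (M : 'M[bool]_(m, n)) : bool :=
  [forall j, colweight M j == w].
Definition mdist m n (M N : 'M[bool]_(m, n)) : nat :=
  #|[set ij : 'I_m * 'I_n | M ij.1 ij.2 != N ij.1 ij.2]|.

Definition is_codeA m n w d (C : {set 'M[bool]_(m, n)}) : bool :=
  [&& C != set0,
      [forall M in C, inJn w M] &
      [forall M in C, forall N in C, (M != N) ==> (2 * d <= mdist M N)]].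

Definition is_codeB m w r (C : {set {ffun 'I_m -> bool}}) : bool :=
  [&& C != set0,
      [forall x in C, inJ w x] &
      [forall x in C, forall y in C, (x != y) ==> (2 * r <= hdist x y)]].

Definition A m n w d : nat := \max_(C : {set 'M[bool]_(m, n)} | is_codeA w d C) #|C|.
Definition B m w r : nat := \max_(C : {set {ffun 'I_m -> bool}} | is_codeB w r C) #|C|.

(* Main.v *)
Require Import Defs.
From mathcomp Require Import all_boot all_order all_algebra.
From mathcomp Require Import zify.
Set Implicit Arguments. Unset Strict Implicit. Unset Printing Implicit Defensive.

Definition colv m n (M : 'M[bool]_(m, n)) (j : 'I_n) : {ffun 'I_m -> bool} :=
  [ffun i => M i j].

Lemma hdist_le m w (x y : {ffun 'I_m -> bool}) :
  inJ w x -> inJ w y -> hdist x y <= 2 * w.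
Proof.
rewrite /inJ /hdist /hweight => /eqP hx /eqP hy.
apply: leq_trans (_ : #|[set i | x i] :|: [set i | y i]| <= _).
  apply: subset_leq_card; apply/subsetP => i; rewrite !inE.
  by case: (x i); case: (y i).
by apply: leq_trans (leq_card_setU _ _) _; rewrite hx hy mul2n addnn.
Qed.

Lemma mdist_sum m n (M N : 'M[bool]_(m, n)) :
  mdist M N = \sum_(j < n) hdist (colv M j) (colv N j).
Proof.
rewrite /mdist /hdist.
rewrite -sum1_card.
transitivity (\sum_(j < n) \sum_(i in [set i | colv M j i != colv N j i]) 1).
  rewrite (exchange_big_dep xpredT) //= pair_big_dep /=.
  by apply: eq_bigl => -[i j] /=; rewrite !inE !ffunE.
by apply: eq_bigr => j _; rewrite sum1_card.
Qed.

Lemma colw m n w (M : 'M[bool]_(m, n)) j : inJn w M -> inJ w (colv M j).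
Proof.
move=> /forallP /(_ j) /eqP <-; rewrite /inJ /hweight /colweight.
by apply/eqP; apply: eq_card => i; rewrite !inE ffunE.
Qed.

Theorem proposition9 (m n w r d : nat) :
  0 < m -> 0 < n -> 0 < w -> w <= m ->
  0 < r -> r <= w -> d = (n - 1) * w + r ->
  A m n w d <= B m w r.
Proof.
move=> _ n0 _ _ r0 _ ->.
case: n n0 => [//|n] _; rewrite subSS subn0.
rewrite /A; apply/bigmax_leqP => C /and3P [Cne /forall_inP Cw /forall_inP Cd].
have key : forall M N, M \in C -> N \in C -> M != N ->
    2 * r <= hdist (colv M ord0) (colv N ord0).
  move=> M N MC NC MN.
  have := implyP ((forall_inP (Cd M MC)) N NC) MN.
  rewrite mdist_sum big_ord_recl.
  have : \sum_(i < n) hdist (colv M (lift ord0 i)) (colv N (lift ord0 i)) <= n * (2 * w).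
    rewrite -[n in n * _]card_ord -sum_nat_const.
    by apply: leq_sum => i _; apply: hdist_le; apply: colw; apply: Cw.
  move=> H1 H2.
  have := leq_trans H2 (leq_add (leqnn _) H1).
  lia.
have inj : {in C &, injective (fun M : 'M[bool]_(m, n.+1) => colv M ord0)}.
  move=> M N MC NC E; apply/eqP; apply/negP => /negP MN.
  have := key M N MC NC MN; rewrite E.
  have -> : hdist (colv N ord0) (colv N ord0) = 0.
    by apply/eqP; rewrite cards_eq0; apply/eqP/setP => i; rewrite !inE eqxx.
  by rewrite leqn0 muln_eq0 /= => /eqP rz; rewrite rz in r0.
rewrite -(card_in_imset inj).
apply: (leq_bigmax_cond (P := fun D => is_codeB w r D) (F := fun D => #|D|)).
apply/and3P; split.
- case/set0Pn: Cne => M MC; apply/set0Pn; exists (colv M ord0); exact: imset_f.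
- apply/forall_inP => x /imsetP [M MC ->]; exact: colw (Cw M MC).
- apply/forall_inP => x /imsetP [M MC ->]; apply/forall_inP => y /imsetP [N NC ->].
  apply/implyP => xy; apply: key => //; apply: contraNneq xy => ->; done.
Qed.
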